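(* For every integer $r\ge 4$ and every positive integer $n$, $\mathrm{ex}(n,S_r,C_4)=\binom{n-1}{r-1}$.
   Context: $S_r$ denotes the star on $r$ vertices (one center joined to $r-1$ leaves), and $C_4$ the cycle on $4$ vertices. For graphs $H,G$, $\mathcal{N}(H,G)$ is the number of subgraphs of $G$ isomorphic to $H$, and $\mathrm{ex}(n,H,F)$ is the maximum of $\mathcal{N}(H,G)$ over $F$-free graphs $G$ on $n$ vertices. *)

(* Defs.v *)
From mathcomp Require Import all_boot.

Set Implicit Arguments. Unset Strict Implicit. Unset Printing Implicit Defensive.

Definition simple_graph (V : finType) (E : {set {set V}}) : bool :=
  [forall e in E, #|e| == 2].

(* (A, F) is a subgraph of G = (V, E) isomorphic to H = (VH, EH):
   F is a set of edges of G and there is an injection f : VH -> V with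
   image A mapping the edge set EH exactly onto F. *)
Definition is_copy (VH V : finType) (EH : {set {set VH}}) (E : {set {set V}})
    (p : {set V} * {set {set V}}) : bool :=
  (p.2 \subset E) &&
  [exists f : {ffun VH -> V},
     [&& injectiveb f, f @: [set: VH] == p.1 &
         [set (fun s : {set VH} => f @: s) s0 | s0 in EH] == p.2]].

Definition count_copies (VH V : finType) (EH : {set {set VH}}) (E : {set {set V}}) : nat :=
  #|[set p : {set V} * {set {set V}} | is_copy EH E p]|.

Definition ex (n : nat) (VH VF : finType) (EH : {set {set VH}}) (EF : {set {set VF}}) : nat :=
  \max_(E : {set {set 'I_n}} | simple_graph E && (count_copies EF E == 0)) count_copies EH E.

Definition star_edges (r : nat) : {set {set 'I_r}} :=
  [set e : {set 'I_r} | [exists i : 'I_r, exists j : 'I_r, [&& val i == 0, val j != 0 & e == [set i; j]]]].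

Definition C4_edges : {set {set 'I_4}} :=
  [set e : {set 'I_4} | [exists i : 'I_4, exists j : 'I_4, (val j == (val i).+1 %% 4) && (e == [set i; j])]].

(* Main.v *)
Require Import Defs.
From mathcomp Require Import all_boot zify.
Set Implicit Arguments. Unset Strict Implicit. Unset Printing Implicit Defensive.

Definition o0 : 'I_4 := @Ordinal 4 0 isT.
Definition o1 : 'I_4 := @Ordinal 4 1 isT.
Definition o2 : 'I_4 := @Ordinal 4 2 isT.
Definition o3 : 'I_4 := @Ordinal 4 3 isT.

Lemma C4_edgesP s : s \in C4_edges ->
  [\/ s = [set o0; o1], s = [set o1; o2], s = [set o2; o3] | s = [set o3; o0]].
Proof.
rewrite inE => /existsP [i /existsP [j /andP [/eqP hj /eqP ->]]].
case: i hj => [[|[|[|[|i]]]] hi] //=; case: j => [[|[|[|[|j]]]] hj] //= _.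
- by constructor 1; congr [set _; _]; apply: val_inj.
- by constructor 2; congr [set _; _]; apply: val_inj.
- by constructor 3; congr [set _; _]; apply: val_inj.
- by constructor 4; congr [set _; _]; apply: val_inj.
Qed.

Lemma C4_edges_in i j : val j = (val i).+1 %% 4 -> [set i; j] \in C4_edges.
Proof. by move=> h; rewrite inE; apply/existsP; exists i; apply/existsP; exists j; rewrite h !eqxx. Qed.

Section Gen.
Variables (V : finType) (E : {set {set V}}).

Definition adj (x y : V) := [set x; y] \in E.

Lemma adj_sym x y : adj x y = adj y x.
Proof. by rewrite /adj setUC. Qed.

Lemma adj_neq x y : simple_graph E -> adj x y -> x != y.
Proof.
move=> /forall_inP sE /sE; apply: contraL => /eqP ->.
by rewrite setUid cards1.
Qed.

Lemma imset2f (aT : finType) (f : aT -> V) x y : f @: [set x; y] = [set f x; f y].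
Proof. by rewrite imsetU1 imset_set1. Qed.

Definition c4f (a x b y : V) : {ffun 'I_4 -> V} :=
  [ffun i : 'I_4 => nth a [:: a; x; b; y] i].

Lemma noC4 a b x y : simple_graph E -> count_copies C4_edges E == 0 ->
  a != b -> x != y -> adj a x -> adj a y -> adj b x -> adj b y -> False.
Proof.
move=> sE /eqP c0 ab xy ax ay bx byy.
have ax' := adj_neq sE ax; have ay' := adj_neq sE ay.
have bx' := adj_neq sE bx; have by' := adj_neq sE byy.
pose f := c4f a x b y.
pose p := (f @: [set: 'I_4], [set (fun s : {set 'I_4} => f @: s) s0 | s0 in C4_edges]).
have : p \in [set p : {set V} * {set {set V}} | is_copy C4_edges E p].
  rewrite inE /is_copy; apply/andP; split.
    apply/subsetP => e /imsetP [s /C4_edgesP hs ->].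
    case: hs => ->; rewrite imset2f /f !ffunE /=.
    - exact: ax.
    - by rewrite setUC.
    - exact: byy.
    - by rewrite setUC.
  apply/existsP; exists f; rewrite !eqxx !andbT.
  apply/injectiveP => i j; rewrite /f !ffunE.
  case: i => [[|[|[|[|i]]]] hi] //=; case: j => [[|[|[|[|j]]]] hj] //= h;
    try (by apply: val_inj);
    move: ab xy ax' ay' bx' by'; rewrite h ?eqxx //= => *;
    rewrite ?eqxx in ab xy ax' ay' bx' by' *; by [].
by move=> hp; move: c0; rewrite /count_copies (cardD1 p) hp.
Qed.
End Gen.

Section Gen.
Variables (V : finType) (E : {set {set V}}).

Lemma C4_extract p : is_copy C4_edges E p -> exists a b x y,
  [/\ a != b, x != y & [/\ adj E a x, adj E a y, adj E b x & adj E b y]].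
Proof.
case/andP => sub /existsP [f /and3P [/injectiveP inj _ /eqP h2]].
have hE i j : val j = (val i).+1 %% 4 -> [set f i; f j] \in E.
  move=> hij; apply: (subsetP sub); rewrite -h2 -imset2f.
  by apply: imset_f; apply: C4_edges_in.
exists (f o0), (f o2), (f o1), (f o3); split.
- by apply/negP => /eqP /inj.
- by apply/negP => /eqP /inj.
split.
- exact: hE.
- by rewrite /adj setUC; apply: hE.
- by rewrite /adj setUC; apply: hE.
- exact: hE.
Qed.
End Gen.

Lemma starP k (s : {set 'I_k.+1}) :
  reflect (exists2 j : 'I_k.+1, val j != 0 & s = [set ord0; j]) (s \in star_edges k.+1).
Proof.
rewrite inE; apply: (iffP existsP) => [[i /existsP [j /and3P [/eqP i0 j0 /eqP ->]]]|[j j0 ->]].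
  by exists j => //; congr [set _; _]; apply: val_inj.
by exists ord0; apply/existsP; exists j; rewrite eqxx j0.
Qed.

Section Gen.
Variables (V : finType) (E : {set {set V}}) (k : nat).

Definition Dset := [set x : {set V} * V |
  [&& x.1 \subset [set t | adj E x.2 t], x.2 \notin x.1 & #|x.1| == k]].

Definition hstar (x : {set V} * V) : {set V} * {set {set V}} :=
  (x.2 |: x.1, [set [set x.2; t] | t in x.1]).

Definition nz := [set i : 'I_k.+1 | val i != 0].

Lemma setT_nz : [set: 'I_k.+1] = ord0 |: nz.
Proof.
apply/setP => i; rewrite !inE; case: (i =P ord0) => [->|/eqP h] //=.

Qed.

Lemma card_nz : #|nz| = k.
Proof.
have := cardsU1 ord0 nz; rewrite -setT_nz cardsT card_ord inE eqxx /=.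
by move=> [].
Qed.

Lemma star_copy_inv p : is_copy (star_edges k.+1) E p ->
  exists2 x, x \in Dset & p = hstar x.
Proof.
case/andP => sub /existsP [f /and3P [/injectiveP inj /eqP h1 /eqP h2]].
have h2' : p.2 = [set [set f ord0; t] | t in f @: nz].
  rewrite -h2; apply/setP => e; apply/imsetP/imsetP.
    case=> s /starP [j j0 ->] ->; exists (f j); first by apply: imset_f; rewrite inE.
    by rewrite imset2f.
  case=> t /imsetP [j j0 ->] ->; exists [set ord0; j].
    by apply/starP; exists j => //; rewrite inE in j0.
  by rewrite imset2f.
exists (f @: nz, f ord0); last first.
  by rewrite /hstar /= -h2' -imsetU1 -setT_nz h1; case: (p).
rewrite inE /=; apply/and3P; split.
- apply/subsetP => t ht; rewrite inE /adj; apply: (subsetP sub).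
  by rewrite h2'; apply: imset_f.
- apply/imsetP => [[j]]; rewrite inE => j0 /inj h.
  by move: j0; rewrite -h.
- by rewrite card_imset ?card_nz //.
Qed.
End Gen.

Section Gen.
Variables (V : finType) (E : {set {set V}}) (k : nat).

Lemma star_copy x : x \in Dset E k -> is_copy (star_edges k.+1) E (hstar x).
Proof.
case: x => T c; rewrite inE /= => /and3P [sub cT /eqP cardT].
pose f := [ffun i : 'I_k.+1 => if val i == 0 then c else nth c (enum T) (val i).-1].
have sz : size (enum T) = k by rewrite -cardE.
have fT j : val j != 0 -> f j \in T.
  move=> j0; rewrite /f ffunE (negbTE j0) -mem_enum; apply: mem_nth.
  by rewrite sz; case: j j0 => [[|j] hj] //=.
have Tf t : t \in T -> exists2 j : 'I_k.+1, val j != 0 & f j = t.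
  move=> tT; have hi : (index t (enum T)).+1 < k.+1.
    by rewrite ltnS -sz index_mem mem_enum.
  exists (Ordinal hi) => //; rewrite /f ffunE /=.
  by rewrite nth_index // mem_enum.
have f0 : f ord0 = c by rewrite /f ffunE.
have inj : injective f.
  move=> i j; rewrite /f !ffunE.
  case: (boolP (val i == 0)) => i0; case: (boolP (val j == 0)) => j0.
  - by move=> _; apply: val_inj; rewrite (eqP i0) (eqP j0).
  - move=> h; have := fT j j0; rewrite /f ffunE (negbTE j0) -h.
    by rewrite (negbTE cT).
  - move=> h; have := fT i i0; rewrite /f ffunE (negbTE i0) h.
    by rewrite (negbTE cT).
  - have li : (val i).-1 < size (enum T) by rewrite sz; case: i i0 => [[|i] hi].
    have lj : (val j).-1 < size (enum T) by rewrite sz; case: j j0 => [[|j] hj].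
    move/eqP; rewrite nth_uniq ?enum_uniq // => /eqP h; apply: val_inj.
    by move: i0 j0 h; case: i {li} => [[|i] hi]; case: j {lj} => [[|j] hj] //= _ _ ->.
have imnz : f @: nz k = T.
  apply/setP => t; apply/imsetP/idP => [[j]|tT].
    by rewrite inE => j0 ->; apply: fT.
  by case: (Tf t tT) => j j0 <-; exists j; rewrite ?inE.
rewrite /is_copy /hstar /=; apply/andP; split.
  apply/subsetP => e /imsetP [t tT ->].
  by have := subsetP sub t tT; rewrite inE.
apply/existsP; exists f; apply/and3P; split.
- exact/injectiveP.
- by rewrite setT_nz imsetU1 imnz f0.
apply/eqP/setP => e; apply/imsetP/imsetP.
  case=> s /starP [j j0 ->] ->; exists (f j); first exact: fT.
  by rewrite imset2f f0.
case=> t tT ->; case: (Tf t tT) => j j0 <-; exists [set ord0; j].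
  by apply/starP; exists j.
by rewrite imset2f f0.
Qed.
End Gen.

Section Gen.
Variables (V : finType) (E : {set {set V}}) (k : nat) (w : V).
Hypothesis sE : simple_graph E.
Hypothesis c4 : count_copies C4_edges E == 0.
Hypothesis k3 : 3 <= k.

Definition gmap (x : {set V} * V) : {set V} :=
  if w \in x.1 then x.2 |: (x.1 :\ w) else x.1.

Lemma two_in (S : {set V}) : 1 < #|S| -> exists x y, [/\ x \in S, y \in S & x != y].
Proof. by move/card_gt1P. Qed.

Lemma gmap_inj : {in Dset E k &, injective gmap}.
Proof.
move=> [T1 c1] [T2 c2]; rewrite !inE /= => /and3P [s1 cT1 /eqP k1] /and3P [s2 cT2 /eqP k2].
have a1 t : t \in T1 -> adj E c1 t by move=> /(subsetP s1); rewrite inE.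
have a2 t : t \in T2 -> adj E c2 t by move=> /(subsetP s2); rewrite inE.
have nc (x y : V) : c1 != c2 -> x != y -> x \in T1 -> y \in T1 -> x \in T2 -> y \in T2 -> False.
  move=> cc xy x1 y1 x2 y2.
  by apply: (noC4 sE c4 cc xy); [apply: a1|apply: a1|apply: a2|apply: a2].
rewrite /gmap /=.
case: (boolP (w \in T1)) => w1; case: (boolP (w \in T2)) => w2.
- move=> h.
  have cd1 : c1 \notin T1 :\ w by rewrite inE negb_and cT1 orbT.
  have cd2 : c2 \notin T2 :\ w by rewrite inE negb_and cT2 orbT.
  case: (eqVneq c1 c2) => [ec|cc].
    subst c2; have := setU1K cd1; rewrite h setU1K // => e.
    by rewrite -(setD1K w1) -(setD1K w2) e.
  exfalso.
  have : 0 < #|(c1 |: (T1 :\ w)) :\ c1 :\ c2|.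
    have hS : #|c1 |: (T1 :\ w)| = k.
      by rewrite cardsU1 cd1 -k1 (cardsD1 w T1) w1.
    have e1 : #|(c1 |: (T1 :\ w)) :\ c1| = k.-1.
      by move: (cardsD1 c1 (c1 |: (T1 :\ w))); rewrite setU11 hS add1n => ->.
    move: (cardsD1 c2 ((c1 |: (T1 :\ w)) :\ c1)); rewrite e1.
    case: (c2 \in _) => /= e; lia.
  case/card_gt0P => z /setD1P [zc2 /setD1P [zc1 hz]].
  have zT1 : z \in T1 :\ w by case/setU1P: hz => // ze; rewrite ze eqxx in zc1.
  have zT2 : z \in T2 :\ w.
    by move: hz; rewrite h => /setU1P [ze|//]; rewrite ze eqxx in zc2.
  move: zT1 zT2; rewrite !inE => /andP [zw z1] /andP [_ z2].
  by apply: (nc w z cc); rewrite // eq_sym.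
- move=> h; exfalso.
  have cc : c1 != c2 by apply: contraNneq cT2 => <-; rewrite -h setU11.
  have : 1 < #|T1 :\ w|.
    by move: (cardsD1 w T1); rewrite w1 k1 /=; lia.
  case/card_gt1P => x [y [x1 y1 xy]].
  have x2 : x \in T2 by rewrite -h setU1r.
  have y2 : y \in T2 by rewrite -h setU1r.
  by move: x1 y1; rewrite !inE => /andP [_ x1] /andP [_ y1]; apply: (nc x y).
- move=> h; exfalso.
  have cc : c1 != c2 by apply: contraNneq cT1 => ->; rewrite h setU11.
  have : 1 < #|T2 :\ w|.
    by move: (cardsD1 w T2); rewrite w2 k2 /=; lia.
  case/card_gt1P => x [y [x2 y2 xy]].
  have x1 : x \in T1 by rewrite h setU1r.
  have y1 : y \in T1 by rewrite h setU1r.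
  by move: x2 y2; rewrite !inE => /andP [_ x2] /andP [_ y2]; apply: (nc x y).
- move=> h; subst T2; case: (eqVneq c1 c2) => [-> //|cc]; exfalso.
  have : 1 < #|T1| by rewrite k1; case: k k3 => [|[|]].
  case/card_gt1P => x [y [x1 y1 xy]].
  by apply: (nc x y).
Qed.
End Gen.

Lemma upper (V : finType) (E : {set {set V}}) (k : nat) (w : V) :
  simple_graph E -> count_copies C4_edges E == 0 -> 3 <= k ->
  count_copies (star_edges k.+1) E <= 'C(#|V|.-1, k).
Proof.
move=> sE c4 k3.
have sub : [set p | is_copy (star_edges k.+1) E p] \subset (@hstar V) @: Dset E k.
  apply/subsetP => p; rewrite inE => /star_copy_inv [x xD ->].
  exact: imset_f.
rewrite /count_copies (leq_trans (subset_leq_card sub)) //.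
rewrite (leq_trans (leq_imset_card _ _)) //.
rewrite -(card_in_imset (@gmap_inj V E k w sE c4 k3)) -(cardsC1 w) -cards_draws.
apply: subset_leq_card; apply/subsetP => S /imsetP [[T c]].
rewrite !inE /= /gmap /= => /and3P [s1 cT /eqP kT] ->.
case: (boolP (w \in T)) => wT.
  have cw : c != w by apply: contraNneq cT => ->.
  apply/andP; split.
    apply/subsetP => z; rewrite !inE; case/predU1P => [->|/andP [] //].
    by rewrite cw.
  rewrite cardsU1 inE negb_and cT orbT -kT (cardsD1 w T) wT.
  by [].
rewrite kT eqxx andbT; apply/subsetP => z zT; rewrite !inE.
by apply: contraNneq wT => <-.
Qed.

Section Lower.
Variables (m k : nat).
Definition E0 : {set {set 'I_m.+1}} :=
  [set [set ord0; t] | t in [set t : 'I_m.+1 | t != ord0]].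

Lemma E0_simple : simple_graph E0.
Proof.
apply/forall_inP => e /imsetP [t]; rewrite inE => t0 ->.
by rewrite cards2 (eq_sym ord0) t0.
Qed.

Lemma adjE0 u v : adj E0 u v -> (u == ord0) = ~~ (v == ord0).
Proof.
case/imsetP => t; rewrite inE => t0 e.
have u1 : u \in [set ord0; t] by rewrite -e setU11.
have v1 : v \in [set ord0; t] by rewrite -e !inE eqxx orbT.
have z1 : ord0 \in [set u; v] by rewrite e setU11.
have t1 : t \in [set u; v] by rewrite e !inE eqxx orbT.
move: u1 v1 z1 t1; rewrite !inE.
case/orP => /eqP ->; case/orP => /eqP -> //=; rewrite ?eqxx ?(negbTE t0) ?(eq_sym ord0 t) ?(negbTE t0) //=.
Qed.

Lemma E0_C4free : count_copies C4_edges E0 == 0.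
Proof.
rewrite /count_copies cards_eq0; apply/eqP/setP => p; rewrite inE in_set0.
apply/negP => /C4_extract [a [b [x [y [ab xy [ax ay bx byy]]]]]].
move/adjE0: ax; move/adjE0: ay; move/adjE0: bx; move/adjE0: byy.
case: (eqVneq a ord0) => [ea|na]; case: (eqVneq b ord0) => [eb|nb];
  case: (eqVneq x ord0) => [ex|nx]; case: (eqVneq y ord0) => [ey|ny] //= *.
- by rewrite ea eb eqxx in ab.
- by rewrite ex ey eqxx in xy.
Qed.

Hypothesis k3 : 3 <= k.

Lemma lower : 'C(m, k) <= count_copies (star_edges k.+1) E0.
Proof.
have -> : 'C(m, k) = #|[set A : {set 'I_m.+1} | A \subset [set~ ord0] & #|A| == k]|.
  by rewrite cards_draws cardsC1 card_ord.
pose hh := fun T : {set 'I_m.+1} => hstar (T, ord0).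
have inj : {in [set A : {set 'I_m.+1} | A \subset [set~ ord0] & #|A| == k] &, injective hh}.
  move=> T1 T2; rewrite !inE => /andP [s1 _] /andP [s2 _] [h] _.
  have n1 : ord0 \notin T1 by apply/negP => /(subsetP s1); rewrite !inE eqxx.
  have n2 : ord0 \notin T2 by apply/negP => /(subsetP s2); rewrite !inE eqxx.
  by rewrite -(setU1K n1) h setU1K.
rewrite -(card_in_imset inj) /count_copies; apply: subset_leq_card.
apply/subsetP => p /imsetP [T]; rewrite inE => /andP [sT /eqP kT] ->.
rewrite inE; apply: star_copy; rewrite inE /=; apply/and3P; split.
- apply/subsetP => t tT; rewrite inE /adj; apply: imset_f.
  by move: (subsetP sT t tT); rewrite !inE.
- by apply/negP => /(subsetP sT); rewrite !inE eqxx.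
- by rewrite kT.
Qed.
End Lower.

Theorem proposition3p2 (r n : nat) :
  4 <= r -> 0 < n -> ex n (star_edges r) C4_edges = 'C(n.-1, r.-1).
Proof.
case: r => [|k] // r4; case: n => [|m] // _.
have k3 : 3 <= k by [].
rewrite /=; apply/eqP; rewrite eqn_leq; apply/andP; split.
  apply/bigmax_leqP => E /andP [sE c4].
  by have := upper ord0 sE c4 k3; rewrite card_ord.
have L := @lower m k. rewrite /ex. apply: (leq_trans L).
by apply: leq_bigmax_cond; rewrite E0_simple E0_C4free.
Qed.
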